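(* Let $\mathbf{\Theta}$ be a countable set of intentions and consider the following language-generation model: an intention $\theta\sim q(\theta)$ is drawn, a message $\mathbf{x}\sim q(\mathbf{x}\mid\theta)$ is generated, and a continuation $\mathbf{y}$ is generated with $q(\mathbf{y}\mid\mathbf{x},\theta)$, so that $q(\mathbf{x},\mathbf{y})=\sum_{\theta\in\mathbf{\Theta}}q(\mathbf{x},\theta)\,q(\mathbf{y}\mid\mathbf{x},\theta)$ and $q(\mathbf{x})=\sum_{\theta}q(\mathbf{x},\theta)$. Suppose the language is $\varepsilon$-ambiguous, and let $\mathbf{x}$ be a prompt generated under intention $\theta_{\mathbf{x}}$ with ambiguity $\varepsilon(\mathbf{x})$, i.e. $\Pr(\theta_{\mathbf{x}}\mid\mathbf{x})\ge 1-\varepsilon(\mathbf{x})$. Let $p_{\mathbf{\Lambda}_*}$ be a language model whose distribution over strings equals the true marginal distribution, $p_{\mathbf{\Lambda}_*}(\mathbf{s})=q(\mathbf{s})$ for all strings $\mathbf{s}$, and let $p_{\mathbf{\Lambda}_*}(\mathbf{y}\mid\mathbf{x})=p_{\mathbf{\Lambda}_*}(\mathbf{x},\mathbf{y})/p_{\mathbf{\Lambda}_*}(\mathbf{x})$. Then for every $\mathbf{y}$, $$\big|p_{\mathbf{\Lambda}_*}(\mathbf{y}\mid\mathbf{x})-q(\mathbf{y}\mid\mathbf{x},\theta_{\mathbf{x}})\big|\le\varepsilon(\mathbf{x}).$$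
   Context: A language is $\varepsilon$-ambiguous if every message $\mathbf{x}$ it generates under intention $\theta_0$ satisfies $\Pr(\theta_0\mid\mathbf{x})\ge 1-\varepsilon(\mathbf{x})$ for some $\varepsilon(\mathbf{x})\in[0,1)$, the ambiguity of $\mathbf{x}$. Here $\Pr(\theta\mid\mathbf{x})=q(\theta,\mathbf{x})/q(\mathbf{x})$ with $q(\theta,\mathbf{x})=q(\theta)q(\mathbf{x}\mid\theta)$. *)

(* Defs.v *)
From HB Require Import structures.
From mathcomp Require Import all_boot all_order all_algebra.
From mathcomp Require Import all_classical all_reals all_analysis.
Set Implicit Arguments. Unset Strict Implicit. Unset Printing Implicit Defensive.
Import Order.TTheory GRing.Theory Num.Theory.
Local Open Scope classical_set_scope.
Local Open Scope ring_scope.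

Section LangModel.
Variables (R : realType) (Theta X Y : countType).
(* qT t = q(theta); qX t x = q(x | theta); qY x t y = q(y | x, theta) *)
Variables (qT : Theta -> R) (qX : Theta -> X -> R) (qY : X -> Theta -> Y -> R).

Definition q_xt (x : X) (t : Theta) : R := qT t * qX t x.

Definition q_marg (x : X) : R :=
  fine (\esum_(t in [set: Theta]) (q_xt x t)%:E).

Definition q_joint (x : X) (y : Y) : R :=
  fine (\esum_(t in [set: Theta]) (q_xt x t * qY x t y)%:E).

Definition posterior (t : Theta) (x : X) : R := q_xt x t / q_marg x.

Definition gen_model : Prop :=
  (forall t, 0 <= qT t) /\
  \esum_(t in [set: Theta]) (qT t)%:E = 1%E /\
  (forall t x, 0 <= qX t x) /\
  (forall t, \esum_(x in [set: X]) (qX t x)%:E = 1%E) /\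
  (forall x t y, 0 <= qY x t y) /\
  (forall x t, \esum_(y in [set: Y]) (qY x t y)%:E = 1%E).
End LangModel.

Definition lm_cond (R : realType) (X Y : Type)
  (pX : X -> R) (pXY : X -> Y -> R) (x : X) (y : Y) : R := pXY x y / pX x.

(* Main.v *)
Require Import Defs.
From HB Require Import structures.
From mathcomp Require Import all_boot all_order all_algebra.
From mathcomp Require Import all_classical all_reals all_analysis.
From mathcomp Require Import ring lra.
Import Order.TTheory GRing.Theory Num.Theory.
Local Open Scope ring_scope.

Lemma esum_split (R : realType) (T : choiceType) (f : T -> R) (t0 : T) :
  (forall t, 0 <= f t) ->
  (\esum_(t in [set: T]) (f t)%:E =
   (f t0)%:E + \esum_(t in (~` [set t0])%classic) (f t)%:E)%E.
Proof.
move=> f0; rewrite (esumID [set t0]) /=; last by move=> i _; rewrite lee_fin.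
by rewrite !setTI esum_set1 // lee_fin.
Qed.

Lemma esum_term_le1 (R : realType) (T : choiceType) (f : T -> R) (t0 : T) :
  (forall t, 0 <= f t) ->
  (\esum_(t in [set: T]) (f t)%:E = 1)%E -> f t0 <= 1.
Proof.
move=> f0 h; have := @esum_split _ _ _ t0 f0; rewrite h => e.
by rewrite -lee_fin e leeDl // esum_ge0 // => i _; rewrite lee_fin.
Qed.

Lemma fin_of (R : realType) (a : R) (m : \bar R) :
  (0 <= m)%E -> ((a%:E + m) <= 1)%E -> exists r : R, m = r%:E /\ 0 <= r.
Proof.
case: m => [r| |] //.
- by move=> h _; exists r; split => //; rewrite -lee_fin.
Qed.

Theorem proposition2 (R : realType) (Theta X Y : countType)
  (qT : Theta -> R) (qX : Theta -> X -> R) (qY : X -> Theta -> Y -> R)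
  (pX : X -> R) (pXY : X -> Y -> R)
  (x : X) (theta_x : Theta) (eps : R) :
  gen_model qT qX qY ->
  0 < q_xt qT qX x theta_x ->
  0 <= eps -> eps < 1 ->
  posterior qT qX theta_x x >= 1 - eps ->
  (forall s, pX s = q_marg qT qX s) ->
  (forall s y, pXY s y = q_joint qT qX qY s y) ->
  forall y : Y, `| lm_cond pX pXY x y - qY x theta_x y | <= eps.
Proof.
move=> [qT0 [qT1 [qX0 [qX1 [qY0 qY1]]]]] Apos eps0 eps1 post hX hXY y.
have xt0 : forall t, 0 <= q_xt qT qX x t.
  by move=> t; rewrite /q_xt mulr_ge0.
have xty0 : forall t, 0 <= q_xt qT qX x t * qY x t y.
  by move=> t; rewrite mulr_ge0.
have qXle1 : forall t, qX t x <= 1.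
  by move=> t; apply: (@esum_term_le1 _ _ _ x (qX0 t) (qX1 t)).
have qYle1 : forall t, qY x t y <= 1.
  by move=> t; apply: (@esum_term_le1 _ _ _ y (qY0 x t) (qY1 x t)).
have Mle1 : (\esum_(t in [set: Theta]) (q_xt qT qX x t)%:E <= 1)%E.
  rewrite -qT1; apply: le_esum => t _; rewrite lee_fin /q_xt.
  have := qT0 t; have := qXle1 t; have := qX0 t x; nra.
have JleM : forall S : set Theta,
  (\esum_(t in S) (q_xt qT qX x t * qY x t y)%:E <=
   \esum_(t in S) (q_xt qT qX x t)%:E)%E.
  move=> S; apply: le_esum => t _; rewrite lee_fin.
  have := xt0 t; have := qYle1 t; have := qY0 x t y; nra.
set A := q_xt qT qX x theta_x.
set b := qY x theta_x y.
have eM := @esum_split _ _ _ theta_x xt0.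
have eJ := @esum_split _ _ _ theta_x xty0.
have Mr0 : (0 <= \esum_(t in (~` [set theta_x])%classic) (q_xt qT qX x t)%:E)%E.
  by apply: esum_ge0 => i _; rewrite lee_fin.
have Jr0 : (0 <= \esum_(t in (~` [set theta_x])%classic)
              (q_xt qT qX x t * qY x t y)%:E)%E.
  by apply: esum_ge0 => i _; rewrite lee_fin.
have JrM := JleM (~` [set theta_x])%classic.
have [mr [emr mr0]] : exists r : R,
    \esum_(t in (~` [set theta_x])%classic) (q_xt qT qX x t)%:E = r%:E /\ 0 <= r.
  by apply: (@fin_of R A _ Mr0); rewrite -eM.
have [jr [ejr jr0]] : exists r : R,
    \esum_(t in (~` [set theta_x])%classic) (q_xt qT qX x t * qY x t y)%:E = r%:E /\ 0 <= r.
  apply: (@fin_of R A _ Jr0); apply: le_trans Mle1; rewrite eM leeD2l //.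
have jrm : jr <= mr by rewrite -lee_fin -ejr -emr.
have qm : q_marg qT qX x = A + mr by rewrite /q_marg eM emr.
have qj : q_joint qT qX qY x y = A * b + jr by rewrite /q_joint eJ ejr.
rewrite /lm_cond hX hXY qm qj.
move: post; rewrite /posterior qm -/A => post.
have Dpos : 0 < A + mr by move: Apos mr0; rewrite -/A; lra.
have hb0 : 0 <= b := qY0 x theta_x y.
have hb1 : b <= 1 := qYle1 theta_x.
have post' : (1 - eps) * (A + mr) <= A by rewrite -ler_pdivlMr.
have -> : (A * b + jr) / (A + mr) - b = (jr - b * mr) / (A + mr).
  by field; rewrite gt_eqF.
rewrite normrM normfV (gtr0_norm Dpos) ler_pdivrMr //.
have hmr : mr <= eps * (A + mr).
  by move: post'; rewrite mulrBl mul1r; lra.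
have bm0 : 0 <= b * mr by rewrite mulr_ge0.
have bm1 : b * mr <= mr by rewrite ler_piMl.
move: hmr bm0 bm1 jrm jr0; set E := eps * (A + mr); set bm := b * mr.
move=> hmr bm0 bm1 jrm jr0.
rewrite ler_norml; apply/andP; split; lra.
Qed.
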